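(* Let $G$ be a graph and $k$ a positive integer with $\operatorname{smw}(G)<k$, and let $P$ be a non-trivial prime graph in a split decomposition of $G$. Then the heavy edges of $P$ (with respect to $k$) form a matching.
   Context: A split of a connected graph $G$ is a partition $(V_1,V_2)$ of $V(G)$ with $|V_1|,|V_2|\ge2$ such that every vertex of $V_1$ with a neighbour in $V_2$ has the same neighbourhood in $V_2$. $\operatorname{mm}(A)$ is the maximum size of a matching among edges between $A$ and $V(G)\setminus A$; $\operatorname{sm}(A)=1$ if $(A,V(G)\setminus A)$ is a split, else $\operatorname{mm}(A)$. A branch decomposition: tree $T$ of max degree 3 with bijection from leaves to $V(G)$; each edge induces a cut; sm-width of $G$, $\operatorname{smw}(G)$, is the minimum over branch decompositions of the maximum $\operatorname{sm}$ of induced cuts. Split decomposition: decomposing along a split $(V_1,V_2)$ gives $G[V_1]$ plus a new marker adjacent to $N_G(V_2)$ and $G[V_2]$ plus the same marker adjacent to $N_G(V_1)$; prime = no split; non-trivial = more than 3 vertices; recursively decomposing until all parts are prime gives a split decomposition, with tree on prime graphs adjacent iff sharing a marker. For $v\in V(G_i)$: $\operatorname{tot}(v:G_i)=\{v\}$ if $v\in V(G)$, else (marker shared with $G_j$) the vertices of $V(G)$ in prime graphs of the component of the tree minus $G_i$ containing $G_j$. $\operatorname{act}(v:G_i)=N_G(V(G)\setminus\operatorname{tot}(v:G_i))$ where $N_G(S)=(\bigcup_{u\in S}N(u))\setminus S$. Adjacent $a,b\in V(G_i)$ form a heavy pair, and $ab$ is a heavy edge, if $|\operatorname{act}(a:G_i)|\ge3k$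 and $|\operatorname{act}(b:G_i)|\ge3k$. *)

(* Defs.v *)
From mathcomp Require Import all_boot.
Set Implicit Arguments. Unset Strict Implicit. Unset Printing Implicit Defensive.

(* Generic graph notions: a graph is a vertex set S : {set T} together *)
(* with an adjacency relation r : rel T (only used between members).   *)

Definition nbr_out (T : finType) (S : {set T}) (r : rel T) (X : {set T}) : {set T} :=
  [set y in S | (y \notin X) && [exists x in X, r x y]].

Definition is_split (T : finType) (S : {set T}) (r : rel T) (V1 : {set T}) : bool :=
  [&& V1 \subset S, 1 < #|V1|, 1 < #|S :\: V1| &
   [forall x in V1, forall x' in V1,
      ([exists y in S :\: V1, r x y] && [exists y in S :\: V1, r x' y]) ==>
      [forall y in S :\: V1, r x y == r x' y]]].

Section SmWidth.
Variables (V : finType) (e : rel V).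

Definition cross_matching (A : {set V}) (Mt : {set V * V}) : bool :=
  [forall p in Mt, [&& p.1 \in A, p.2 \notin A & e p.1 p.2]] &&
  [forall p in Mt, forall q in Mt, ((p.1 == q.1) || (p.2 == q.2)) ==> (p == q)].

Definition mm (A : {set V}) : nat :=
  \max_(Mt : {set V * V} | cross_matching A Mt) #|Mt|.

Definition sm (A : {set V}) : nat :=
  if is_split [set: V] e A then 1 else mm A.

Definition rel_minus (N : finType) (t : rel N) (a b : N) : rel N :=
  [rel x y | t x y && ~~ (((x == a) && (y == b)) || ((x == b) && (y == a)))].

(* (N, t) is a tree of maximum degree 3, lf a bijection from V to its leaves. *)
Definition is_branch_decomp (N : finType) (t : rel N) (lf : V -> N) : Prop :=
  [/\ symmetric t, irreflexive t, (forall x y, connect t x y) &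
      [/\
      (forall x y, t x y -> ~~ connect (rel_minus t x y) x y),
      (forall x, #|[set y | t x y]| <= 3),
      injective lf &
      (forall x, (#|[set y | t x y]| <= 1) = (x \in codom lf))]].

Definition bd_cut (N : finType) (t : rel N) (lf : V -> N) (a b : N) : {set V} :=
  [set v | connect (rel_minus t a b) a (lf v)].

(* smw(G) < k : some branch decomposition has all induced cuts of sm-value < k
   (i.e. the minimum over decompositions of the maximum is < k). *)
Definition smw_lt (k : nat) : Prop :=
  exists (N : finType) (t : rel N) (lf : V -> N),
    is_branch_decomp t lf /\
    (forall a b, t a b -> sm (bd_cut t lf a b) < k).

End SmWidth.

(* Split decompositions.  Vertices of the parts live in V + M:         *)
(* inl v is an original vertex, inr m is a marker vertex.              *)

Record part (U : finType) := Part { pv : {set U}; pe : rel U }.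

Definition side (U : finType) (p : part U) (W Wo : {set U}) (z : U) : part U :=
  Part (W :|: [set z])
    (fun x y => [&& x \in W, y \in W & pe p x y]
             || ((x == z) && (y \in nbr_out (pv p) (pe p) Wo))
             || ((y == z) && (x \in nbr_out (pv p) (pe p) Wo))).

Section SplitDecomp.
Variables (V M : finType) (e : rel V).

Definition init_part : part (V + M)%type :=
  Part [set inl v | v : V]
       (fun x y => match x, y with inl a, inl b => e a b | _, _ => false end).

Inductive sd_reach : seq (part (V + M)%type) -> Prop :=
| sd_init : sd_reach [:: init_part]
| sd_step (ps : seq (part (V + M)%type)) (i : nat) (V1 : {set (V + M)%type}) (m : M) :
    sd_reach ps -> i < size ps ->
    is_split (pv (nth init_part ps i)) (pe (nth init_part ps i)) V1 ->
    all (fun q => inr m \notin pv q) ps ->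
    sd_reach (rcons
      (set_nth init_part ps i
         (side (nth init_part ps i) V1 (pv (nth init_part ps i) :\: V1) (inr m)))
      (side (nth init_part ps i) (pv (nth init_part ps i) :\: V1) V1 (inr m))).

Definition is_split_decomp (ps : seq (part (V + M)%type)) : Prop :=
  sd_reach ps /\
  (forall i, i < size ps -> forall V1,
      ~~ is_split (pv (nth init_part ps i)) (pe (nth init_part ps i)) V1).

Definition pt (ps : seq (part (V + M)%type)) (i : 'I_(size ps)) : part (V + M)%type :=
  nth init_part ps i.

(* Adjacency in the decomposition tree: sharing a marker. *)
Definition tadj (ps : seq (part (V + M)%type)) (i j : 'I_(size ps)) : bool :=
  (i != j) && [exists m : M, (inr m \in pv (pt i)) && (inr m \in pv (pt j))].

Definition tot (ps : seq (part (V + M)%type)) (i : 'I_(size ps)) (v : V + M) : {set V} :=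
  match v with
  | inl x => [set x]
  | inr m =>
      [set x | [exists j, [exists k,
         [&& j != i, inr m \in pv (pt j),
             connect [rel a b | [&& a != i, b != i & tadj a b]] j k &
             inl x \in pv (pt k)]]]]
  end.

Definition nbhdG (S : {set V}) : {set V} :=
  [set y | (y \notin S) && [exists x in S, e x y]].

Definition act (ps : seq (part (V + M)%type)) (i : 'I_(size ps)) (v : V + M) : {set V} :=
  nbhdG (~: tot i v).

Definition heavy (k : nat) (ps : seq (part (V + M)%type)) (i : 'I_(size ps)) (a b : V + M) : bool :=
  [&& a \in pv (pt i), b \in pv (pt i), pe (pt i) a b,
      3 * k <= #|act i a| & 3 * k <= #|act i b|].

End SplitDecomp.

(* Main.v *)
Require Import Defs.
From mathcomp Require Import all_boot.
From mathcomp Require Import zify.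
From Stdlib Require Import Classical.
Set Implicit Arguments. Unset Strict Implicit. Unset Printing Implicit Defensive.

Lemma connect_ind' (T : finType) (r : rel T) (P : T -> Prop) x :
  P x -> (forall a b, P a -> r a b -> P b) -> forall y, connect r x y -> P y.
Proof.
move=> Px IH y /connectP [s]; elim: s x Px => [|z s IHs] x Px /=; first by move=> _ ->.
case/andP=> rxz ps; exact: (IHs z (IH _ _ Px rxz) ps).
Qed.

Section Tree.
Variables (V N : finType) (t : rel N) (lf : V -> N).
Hypothesis (tsym : symmetric t) (tirr : irreflexive t) (tcon : forall x y, connect t x y)
  (ttree : forall x y, t x y -> ~~ connect (rel_minus t x y) x y)
  (tdeg : forall x, #|[set y | t x y]| <= 3)
  (lfinj : injective lf)
  (tleaf : forall x, (#|[set y | t x y]| <= 1) = (x \in codom lf)).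

Definition S p q := bd_cut t lf p q.

Lemma rm_sym p q : symmetric (rel_minus t p q).
Proof.
move=> x y; rewrite /rel_minus /= tsym; congr (_ && ~~ _).
by rewrite orbC; congr (_ || _); rewrite andbC.
Qed.

Lemma rm_swap p q x y : rel_minus t p q x y = rel_minus t q p x y.
Proof. by rewrite /rel_minus /= orbC. Qed.

Lemma ttree' p q : t p q -> ~~ connect (rel_minus t p q) q p.
Proof. by move=> tpq; rewrite (sym_connect_sym (@rm_sym p q)) ttree. Qed.

Lemma side_or p q n : t p q -> connect (rel_minus t p q) p n || connect (rel_minus t p q) q n.
Proof.
move=> tpq; apply: (connect_ind' (P := fun n => connect (rel_minus t p q) p n || connect (rel_minus t p q) q n)) (tcon p n).
  by rewrite connect0.
move=> a b /orP Ha tab.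
case E: (((a == p) && (b == q)) || ((a == q) && (b == p))).
  by case/orP: E => /andP [_ /eqP ->]; rewrite connect0 ?orbT.
have rab : rel_minus t p q a b by rewrite /rel_minus /= tab E.
case: Ha => Ha; apply/orP; [left|right]; exact: connect_trans Ha (connect1 rab).
Qed.

Lemma side_not_both p q n : t p q -> connect (rel_minus t p q) p n -> connect (rel_minus t p q) q n -> False.
Proof.
move=> tpq H1 H2; move: (ttree tpq); rewrite (connect_trans H1) //.
by rewrite (sym_connect_sym (@rm_sym p q)).
Qed.

Lemma S_compl p q v : t p q -> (v \in S q p) = (v \notin S p q).
Proof.
move=> tpq; rewrite /S /bd_cut !inE.
have E : connect (rel_minus t q p) q (lf v) = connect (rel_minus t p q) q (lf v).
  by apply: eq_connect => x y; rewrite rm_swap.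
rewrite E; have := side_or (lf v) tpq; have := @side_not_both p q (lf v) tpq.
by case: (connect _ p _); case: (connect _ q _) => //= H _; case: H.
Qed.

Lemma leaf_side p q n : t p q -> p \in codom lf -> connect (rel_minus t p q) p n -> n = p.
Proof.
move=> tpq /[dup] pl; rewrite -tleaf => hdeg.
move: n; apply: (connect_ind' (P := fun n => n = p)) => // a b -> /andP [tpb]; rewrite eqxx /=.
have: b == q.
  apply/negPn/negP => bq.
  have: #|[set q; b]| <= #|[set y | t p y]|.
    by apply: subset_leq_card; apply/subsetP => y; rewrite !inE => /orP [] /eqP ->.
  by rewrite cards2 eq_sym bq /= => /leq_trans /(_ hdeg).
by move=> /eqP ->; rewrite eqxx.
Qed.

Lemma child_sub p q y n : t p q -> t p y -> y != q ->
  connect (rel_minus t y p) y n -> connect (rel_minus t p q) p n /\ n != p.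
Proof.
move=> tpq tpy yq.
have pq : p != q by apply: contraTneq tpq => ->; rewrite tirr.
have ty : t y p by rewrite tsym.
have Hn : forall n, connect (rel_minus t y p) y n -> n != p.
  move=> m Hm; apply/eqP=> E; subst m; by move: (ttree ty); rewrite Hm.
move=> H; split; last exact: Hn H.
have : connect (rel_minus t y p) y n /\ connect (rel_minus t p q) p n; last by case.
move: n H; apply: (connect_ind' (P := fun n => connect (rel_minus t y p) y n /\ connect (rel_minus t p q) p n)).
  split=> //; apply: connect1; rewrite /rel_minus /= tpy.
  by rewrite eqxx /= (negbTE yq) /= (negbTE pq).
move=> a b [Ha Ha'] rab; have Hb := connect_trans Ha (connect1 rab).
split=> //; apply: (connect_trans Ha'); apply: connect1.
move: rab; rewrite /rel_minus /= => /andP [-> _] /=.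
by rewrite (negbTE (Hn _ Ha)) (negbTE (Hn _ Hb)) /= !andbF.
Qed.

Lemma side_child p q n : t p q -> connect (rel_minus t p q) p n -> n != p ->
  exists2 y, (t p y && (y != q)) & connect (rel_minus t y p) y n.
Proof.
move=> tpq H; move: n H.
apply: (connect_ind' (P := fun n => n != p -> exists2 y, (t p y && (y != q)) & connect (rel_minus t y p) y n)).
  by rewrite eqxx.
move=> a b IH rab bp.
case: (eqVneq a p) => [Ea|ap].
  subst a; exists b; last exact: connect0.
  move: rab; rewrite /rel_minus /= eqxx /= => /andP [-> ]; rewrite negb_or.
  by case/andP=> -> _.
have [y Hy Hc] := IH ap; exists y => //; apply: (connect_trans Hc); apply: connect1.
move: rab; rewrite /rel_minus /= => /andP [-> _] /=.
by rewrite (negbTE ap) (negbTE bp) /= !andbF.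
Qed.

Lemma child_card p q y1 y2 y : t p q -> t p y1 -> t p y2 -> t p y ->
  y1 != q -> y2 != q -> y != q -> y1 != y2 -> (y == y1) || (y == y2).
Proof.
move=> tpq t1 t2 ty n1 n2 n3 n12; apply/negPn/negP; rewrite negb_or => /andP [a1 a2].
have U : uniq [:: q; y1; y2; y].
  rewrite /= !inE !negb_or (eq_sym q y1) n1 (eq_sym q y2) n2 (eq_sym q y) n3 n12.
  by rewrite (eq_sym y1 y) (eq_sym y2 y) a1 a2.
have: #|[:: q; y1; y2; y]| <= #|[set z | t p z]|.
  apply: subset_leq_card; apply/subsetP => z; rewrite !inE.
  by case/or4P => /eqP ->.
by rewrite (card_uniqP U) => /leq_trans /(_ (tdeg p)).
Qed.


Lemma inS p q v : (v \in S p q) = connect (rel_minus t p q) p (lf v).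
Proof. by rewrite /S /bd_cut inE. Qed.

Lemma S_complE p q : t p q -> S q p = ~: S p q.
Proof. by move=> tpq; apply/setP => v; rewrite in_setC S_compl. Qed.

Definition Cn p q := #|[set n | connect (rel_minus t p q) p n]|.

Lemma Cn_lt p q y : t p q -> t p y -> y != q -> Cn y p < Cn p q.
Proof.
move=> tpq tpy yq; rewrite /Cn; apply: proper_card; apply/properP; split.
  apply/subsetP => n; rewrite !inE => H; by case: (child_sub tpq tpy yq H).
exists p; first by rewrite inE connect0.
rewrite inE; apply/negP => H; have typ : t y p by rewrite tsym.
by move: (ttree typ); rewrite H.
Qed.

Lemma child_S p q y v : t p q -> t p y -> y != q -> v \in S y p -> v \in S p q.
Proof. by move=> tpq tpy yq; rewrite !inS => H; case: (child_sub tpq tpy yq H). Qed.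

Lemma leaf_S p q v w : t p q -> p \in codom lf -> v \in S p q -> w \in S p q -> v = w.
Proof.
move=> tpq pl; rewrite !inS => Hv Hw; apply: lfinj.
by rewrite (leaf_side tpq pl Hv) (leaf_side tpq pl Hw).
Qed.

Lemma children2 p q : t p q -> p \notin codom lf ->
  exists y1 y2, [/\ t p y1 && (y1 != q), t p y2 && (y2 != q) &
     forall y, t p y -> y != q -> y = y1 \/ y = y2].
Proof.
move=> tpq pl.
have : 1 < #|[set y | t p y]| by rewrite ltnNge tleaf.
rewrite (cardsD1 q) inE tpq add1n ltnS card_gt0 => /set0Pn [y1]; rewrite !inE => /andP [y1q ty1].
case: (pickP [pred y | t p y && (y != q) && (y != y1)]) => [y2 /= /andP [/andP [ty2 y2q] y21]|H].
  exists y1, y2; split; rewrite ?ty1 ?y1q ?ty2 ?y2q //.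
  move=> y ty yq; have := child_card tpq ty1 ty2 ty y1q y2q yq; rewrite eq_sym y21 => /(_ isT).
  by case/orP => /eqP ->; [left|right].
exists y1, y1; split; rewrite ?ty1 ?y1q //.
move=> y ty yq; move: (H y) => /=; rewrite ty yq /= => /negbFE /eqP ->; by left.
Qed.

Lemma children_disj p y1 y2 v : t p y1 -> t p y2 -> y1 != y2 -> v \in S y1 p -> v \notin S y2 p.
Proof.
move=> t1 t2 y12 H; have := child_S t2 t1 y12 H.
by rewrite -S_compl // tsym.
Qed.

Lemma leq_cardU (T : finType) (A B : {set T}) : #|A :|: B| <= #|A| + #|B|.
Proof. by rewrite cardsU leq_subr. Qed.

Lemma card_compl (A : {set V}) p q : t p q -> #|A :&: S q p| = #|A| - #|A :&: S p q|.
Proof. by move=> tpq; rewrite S_complE // -setDE -(cardsID (S p q) A) addKn. Qed.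

Lemma edge_ex (v w : V) : v != w -> exists p q, t p q.
Proof.
move=> vw; have : lf v != lf w by apply: contra vw => /eqP /lfinj ->.
move: (tcon (lf v) (lf w)) => /connectP [[|z s] /=]; first by move=> _ ->; rewrite eqxx.
by case/andP=> tz _ _ _; exists (lf v), z.
Qed.

Lemma cover_bound (A : {set V}) p q : t p q -> p \notin codom lf ->
  exists y1 y2, [/\ t p y1 && (y1 != q), t p y2 && (y2 != q),
     (forall y, t p y -> y != q -> y = y1 \/ y = y2) &
     A :&: S p q \subset (A :&: S y1 p) :|: (A :&: S y2 p)].
Proof.
move=> tpq pl; have [y1 [y2 [H1 H2 H3]]] := children2 tpq pl.
exists y1, y2; split => //; apply/subsetP => v; rewrite !inE => /andP [vA]; rewrite -inS => vS.
have lvp : lf v != p by apply: contra pl => /eqP <-; exact: codom_f.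
rewrite inS in vS; have [y /andP [ty yq]] := side_child tpq vS lvp.
rewrite vA /= -!inS; by case: (H3 y ty yq) => <- ->; rewrite ?orbT.
Qed.

Lemma bal (A : {set V}) k : 0 < k -> 3 * k <= #|A| ->
  exists p q, [/\ t p q, k <= #|A :&: S p q| & k <= #|A :&: S q p|].
Proof.
move=> k0 hA.
have [p [q tpq]] : exists p q, t p q.
  have : 1 < #|A| by apply: leq_trans hA; lia.
  by case/card_gt1P => v [w [_ _ vw]]; exact: edge_ex vw.
suff H : forall n p q, t p q -> Cn p q <= n -> k <= #|A :&: S p q| ->
  exists p q, [/\ t p q, k <= #|A :&: S p q| & k <= #|A :&: S q p|].
  case: (leqP k #|A :&: S p q|) => h; first exact: (H _ p q tpq (leqnn _) h).
  have tqp : t q p by rewrite tsym.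
  apply: (H _ q p tqp (leqnn _)); rewrite card_compl //; lia.
elim=> [|n IH] {tpq}p {}q tpq.
  by rewrite leqn0 cards_eq0 => /eqP E; move: (in_set0 p); rewrite -E inE connect0.
move=> hC hk.
suff [bound|//] : #|A :&: S p q| < k.*2 \/ exists p q,
   [/\ t p q, k <= #|A :&: S p q| & k <= #|A :&: S q p|].
  by exists p, q; split => //; rewrite card_compl //; lia.
case: (boolP (p \in codom lf)) => pl.
  left; apply: leq_trans (_ : 2 <= _); last lia.
  rewrite ltnS; apply/card_le1_eqP => v w; rewrite !inE => /andP [_ vS] /andP [_ wS].
  by apply: leaf_S tpq pl _ _; rewrite inS.
have [y1 [y2 [/andP [t1 n1] /andP [t2 n2] _ sub]]] := cover_bound A tpq pl.
case: (leqP k #|A :&: S y1 p|) => h1.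
  right; apply: (IH y1 p) => //; first by rewrite tsym.
  by rewrite -ltnS; apply: leq_trans hC; apply: Cn_lt.
case: (leqP k #|A :&: S y2 p|) => h2.
  right; apply: (IH y2 p) => //; first by rewrite tsym.
  by rewrite -ltnS; apply: leq_trans hC; apply: Cn_lt.
left; have := subset_leq_card sub; have := leq_cardU (A :&: S y1 p) (A :&: S y2 p); lia.
Qed.

Section Comb.
Variables (U : finType) (e : rel V) (Pv : {set U}) (W : U -> {set V}) (k : nat).

Definition touch (X : {set V}) u := W u :&: X != set0.
Definition tau2 (X : {set V}) := exists u w, [/\ u \in Pv, w \in Pv, u != w, touch X u & touch X w].
Definition complete (A B : {set V}) := forall x y, x \in A -> y \in B -> e x y.
Definition Goodc (X : {set V}) := tau2 X /\ tau2 (~: X) /\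
  exists S1 S2 : {set V}, [/\ S1 \subset X, S2 \subset ~: X, k <= #|S1|, k <= #|S2| & complete S1 S2].

Hypothesis (k0 : 0 < k)
  (HW : forall u w, u \in Pv -> w \in Pv -> u != w -> [disjoint W u & W w])
  (Hne : forall u, u \in Pv -> W u != set0).

Lemma touchP (X : {set V}) u : reflect (exists2 x, x \in W u & x \in X) (touch X u).
Proof.
rewrite /touch; apply: (iffP (set0Pn _)) => [[x]|[x h1 h2]]; first by rewrite inE => /andP [] ; exists x.
by exists x; rewrite inE h1 h2.
Qed.

Lemma touch_or (X : {set V}) u : u \in Pv -> touch X u || touch (~: X) u.
Proof.
move=> uP; have /set0Pn [x xW] := Hne uP.
case: (boolP (x \in X)) => xX; apply/orP; [left|right]; apply/touchP; exists x => //.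
by rewrite inE.
Qed.

Lemma notouch (X : {set V}) u : ~~ touch X u -> W u \subset ~: X.
Proof.
move=> h; apply/subsetP => x xW; rewrite inE; apply: contra h => xX; apply/touchP; by exists x.
Qed.

Lemma touch_card (X : {set V}) u : 0 < #|W u :&: X| -> touch X u.
Proof. by rewrite card_gt0. Qed.

Lemma complete_sub (A B A' B' : {set V}) : complete A B -> A' \subset A -> B' \subset B -> complete A' B'.
Proof. by move=> h /subsetP s1 /subsetP s2 x y /s1 xa /s2 yb; exact: h. Qed.

Lemma card_split (A X : {set V}) : #|A :&: X| + #|A :&: ~: X| = #|A|.
Proof. by rewrite -setDE cardsID. Qed.

Lemma arith1 (x y k' : nat) : 3 * k' <= x -> y < k' -> k' + y <= x.
Proof. lia. Qed.

Variables (a b c d : U).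
Hypothesis (aP : a \in Pv) (bP : b \in Pv) (cP : c \in Pv) (dP : d \in Pv)
  (ab : a != b) (ac : a != c) (ad : a != d) (bc : b != c) (bd : b != d) (cd : c != d)
  (cab : complete (W a) (W b)) (cba : complete (W b) (W a)) (cca : complete (W c) (W a))
  (sa : 3 * k <= #|W a|) (sb : 3 * k <= #|W b|) (sc : 3 * k <= #|W c|).

Definition pocket p q := [/\ t p q, k <= #|W b :&: S p q| &
  forall u, u \in Pv -> touch (S p q) u -> u = b].

Lemma stepB_side p q : t p q -> k <= #|W b :&: S p q| ->
  ~~ touch (S p q) a -> ~~ touch (S p q) c -> Goodc (S p q) \/ pocket p q.
Proof.
move=> tpq hb na nc.
have ta : touch (~: S p q) a by move: (touch_or (S p q) aP); rewrite (negbTE na).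
have tc : touch (~: S p q) c by move: (touch_or (S p q) cP); rewrite (negbTE nc).
have tb : touch (S p q) b by apply: touch_card; exact: leq_trans k0 hb.
case: (boolP [exists u in Pv, (u != b) && touch (S p q) u]) => [/existsP [u /and3P [uP ub tu]]|H].
  left; split; first by exists u, b; split.
  split; first by exists a, c; split.
  exists (W b :&: S p q), (W a); split => //; first exact: subsetIr.
    exact: notouch. by apply: leq_trans sa; rewrite leq_pmull.
  by apply: complete_sub cba _ _ => //; exact: subsetIl.
right; split => // u uP tu; apply/eqP; apply: contraNT H => ub.
by apply/existsP; exists u; rewrite uP ub tu.
Qed.

Lemma stepB : (exists p q, t p q /\ Goodc (S p q)) \/ exists p q, pocket p q.
Proof.
have [p [q [tpq h1 h2]]] := bal k0 sb.
have tqp : t q p by rewrite tsym.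
have E := S_complE tpq.
have E' : ~: S q p = S p q by rewrite E setCK.
case: (boolP (touch (S p q) a || touch (S p q) c)) => tA; last first.
  rewrite negb_or in tA; case/andP: tA => na nc.
  by case: (stepB_side tpq h1 na nc) => [G|P]; [left; exists p, q|right; exists p, q].
case: (boolP (touch (S q p) a || touch (S q p) c)) => tB; last first.
  rewrite negb_or in tB; case/andP: tB => na nc.
  by case: (stepB_side tqp h2 na nc) => [G|P]; [left; exists q, p|right; exists q, p].
left; exists p, q; split => //.
have tb1 : touch (S p q) b by apply: touch_card; exact: leq_trans k0 h1.
have tb2 : touch (~: S p q) b by rewrite -E; apply: touch_card; exact: leq_trans k0 h2.
split.
  case/orP: tA => [t1|t1]; [exists a, b|exists c, b]; split => //; by rewrite eq_sym.
split.
  rewrite -E; case/orP: tB => [t1|t1]; [exists a, b|exists c, b]; split => //; rewrite ?E //; by rewrite eq_sym.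
have cs := card_split (W a) (S p q).
case: (leqP k #|W a :&: ~: S p q|) => ha.
  exists (W b :&: S p q), (W a :&: ~: S p q); split => //; rewrite ?subsetIr //.
  by apply: complete_sub cba _ _; exact: subsetIl.
exists (W a :&: S p q), (W b :&: ~: S p q); split => //; rewrite ?subsetIr //; rewrite -?E //.
  by move: cs; rewrite /= -(leq_add2r #|W a :&: ~: S p q|) => ->; apply: arith1.
by apply: complete_sub cab _ _; exact: subsetIl.
Qed.


Definition Omega (X : {set V}) := [/\ k <= #|W a :&: X|, tau2 X & k <= #|W b :&: ~: X|].

Lemma ge3k_k x : 3 * k <= x -> k <= x.
Proof. by move/(leq_trans _); apply; rewrite leq_pmull. Qed.

Lemma touch_sub (X Y : {set V}) u : X \subset Y -> touch X u -> touch Y u.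
Proof. move=> /subsetP s /touchP [x h1 h2]; apply/touchP; exists x => //; exact: s. Qed.

Lemma notau2_only (X : {set V}) u w : ~ tau2 X -> u \in Pv -> w \in Pv -> touch X u -> touch X w -> w = u.
Proof.
move=> H uP wP tu tw; apply/eqP; apply/negPn/negP => wu; apply: H.
by exists w, u; split.
Qed.

Lemma stepD_children p q yA yB :
  t p q -> t p yA -> yA != q -> t p yB -> yB != q ->
  (forall v, v \in S p q -> (v \in S yA p) || (v \in S yB p)) ->
  k <= #|W a :&: S yA p| -> ~ tau2 (S yA p) ->
  W c \subset S p q -> W d \subset S p q -> touch (~: S p q) b ->
  Goodc (S yB p).
Proof.
move=> tpq tA nA tB nB cov hA nt sc' sd' tb.
have tAa : touch (S yA p) a by apply: touch_card; exact: leq_trans k0 hA.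
have nAc : ~~ touch (S yA p) c.
  by apply/negP => h; move: (notau2_only nt aP cP tAa h); apply/eqP; rewrite eq_sym.
have nAd : ~~ touch (S yA p) d.
  by apply/negP => h; move: (notau2_only nt aP dP tAa h); apply/eqP; rewrite eq_sym.
have inB : forall u, ~~ touch (S yA p) u -> W u \subset S p q -> W u \subset S yB p.
  move=> u nu /subsetP su; apply/subsetP => v vW; have vX := su v vW.
  case/orP: (cov v vX) => // vA; case/negP: nu; apply/touchP; by exists v.
have cB := inB c nAc sc'; have dB := inB d nAd sd'.
have yAB : yA != yB.
  apply/negP => /eqP E; subst yB; have /set0Pn [v vW] := Hne cP.
  case/negP: nAc; apply/touchP; exists v => //; exact: (subsetP cB).
have tne : forall u (Y : {set V}), u \in Pv -> W u \subset Y -> touch Y u.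
  move=> u Y uP sY; have /set0Pn [v vW] := Hne uP; apply/touchP; exists v => //; exact: (subsetP sY).
split; first by exists c, d; split => //; apply: tne.
have disj : S yA p \subset ~: S yB p.
  by apply/subsetP => v vA; rewrite inE; apply: (children_disj tA tB yAB vA).
split.
  exists a, b; split => //.
    exact: touch_sub disj tAa.
  apply: touch_sub tb; apply/subsetP => v; rewrite !in_setC; apply: contra.
  exact: child_S tpq tB nB.
exists (W c), (W a :&: S yA p); split => //.
- apply: subset_trans disj; exact: subsetIr.
- exact: ge3k_k.
- by apply: complete_sub cca _ _ => //; exact: subsetIl.
Qed.

Lemma arith2 (x y z k' : nat) : 3 * k' <= z -> z <= x + y -> x < k' -> y < k' -> False.
Proof. lia. Qed.

Lemma stepD n p q : t p q -> Cn p q <= n -> Omega (S p q) ->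
  exists p' q', t p' q' /\ Goodc (S p' q').
Proof.
elim: n p q => [|n IH] p q tpq.
  by rewrite leqn0 cards_eq0 => /eqP E; move: (in_set0 p); rewrite -E inE connect0.
move=> hC [hA t2 hB].
case: (classic (tau2 (~: S p q))) => t2c.
  exists p, q; split => //; split => //; split => //.
  exists (W a :&: S p q), (W b :&: ~: S p q); split => //; rewrite ?subsetIr //.
  by apply: complete_sub cab _ _; exact: subsetIl.
have tb : touch (~: S p q) b by apply: touch_card; exact: leq_trans k0 hB.
have inX : forall u, u \in Pv -> u != b -> W u \subset S p q.
  move=> u uP ub; rewrite -[S p q]setCK; apply: notouch; apply/negP => tu.
  by move: (notau2_only t2c bP uP tb tu); apply/eqP.
case: (boolP (p \in codom lf)) => pl.
  case: t2 => u [w [uP wP uw /touchP [x xu xX] /touchP [y yw yX]]].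
  have E := leaf_S tpq pl xX yX; subst y.
  by rewrite (disjointFr (HW uP wP uw) xu) in yw.
have [y1 [y2 [/andP [t1 n1] /andP [t2' n2] H3]]] := children2 tpq pl.
have cov : forall v, v \in S p q -> (v \in S y1 p) || (v \in S y2 p).
  move=> v; rewrite inS => vS.
  have lvp : lf v != p by apply: contra pl => /eqP <-; exact: codom_f.
  have [y /andP [ty yq]] := side_child tpq vS lvp.
  by rewrite -inS; case: (H3 y ty yq) => <- ->; rewrite ?orbT.
have subC : forall y, t p y -> y != q -> ~: S p q \subset ~: S y p.
  move=> y ty yq; apply/subsetP => v; rewrite !in_setC; apply: contra; exact: child_S.
have hBy : forall y, t p y -> y != q -> k <= #|W b :&: ~: S y p|.
  move=> y ty yq; apply: leq_trans hB _; apply: subset_leq_card; apply: setIS; exact: subC.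
have ltC : forall y, t p y -> y != q -> Cn y p <= n.
  by move=> y ty yq; rewrite -ltnS; apply: leq_trans hC; apply: Cn_lt.
have typ : forall y, t p y -> t y p by move=> y ty; rewrite tsym.
case: (classic (Omega (S y1 p))) => o1; first exact: (IH y1 p (typ _ t1) (ltC _ t1 n1) o1).
case: (classic (Omega (S y2 p))) => o2; first exact: (IH y2 p (typ _ t2') (ltC _ t2' n2) o2).
have WaX := inX a aP ab.
have cb : c != b by rewrite eq_sym.
have db : d != b by rewrite eq_sym.
case: (leqP k #|W a :&: S y1 p|) => h1.
  have nt1 : ~ tau2 (S y1 p) by move=> tt; apply: o1; split => //; exact: hBy.
  exists y2, p; split; first exact: typ.
  exact: (stepD_children tpq t1 n1 t2' n2 cov h1 nt1 (inX c cP cb) (inX d dP db) tb).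
case: (leqP k #|W a :&: S y2 p|) => h2.
  have nt2 : ~ tau2 (S y2 p) by move=> tt; apply: o2; split => //; exact: hBy.
  exists y1, p; split; first exact: typ.
  have cov' : forall v, v \in S p q -> (v \in S y2 p) || (v \in S y1 p).
    by move=> v /cov; rewrite orbC.
  exact: (stepD_children tpq t2' n2 t1 n1 cov' h2 nt2 (inX c cP cb) (inX d dP db) tb).
exfalso; apply: (arith2 sa _ h1 h2).
have -> : #|W a| = #|W a :&: S p q| by rewrite (setIidPl WaX).
apply: leq_trans (subset_leq_card (_ : _ \subset (W a :&: S y1 p) :|: (W a :&: S y2 p))) (leq_cardU _ _).
apply/subsetP => v; rewrite !inE => /andP [-> /=]; rewrite -!inS => /cov.
by case/orP => ->; rewrite ?orbT.
Qed.

Lemma comb_main : exists p q, t p q /\ Goodc (S p q).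
Proof.
case: stepB => [//|[p [q [tpq hb only]]]].
have tqp : t q p by rewrite tsym.
have E := S_complE tpq.
have nta : ~~ touch (S p q) a by apply/negP => /(only a aP) /eqP; rewrite (negbTE ab).
have ntc : ~~ touch (S p q) c by apply/negP => /(only c cP) /eqP; rewrite eq_sym (negbTE bc).
have ta : touch (S q p) a by rewrite E; move: (touch_or (S p q) aP); rewrite (negbTE nta).
have tc : touch (S q p) c by rewrite E; move: (touch_or (S p q) cP); rewrite (negbTE ntc).
apply: (stepD tqp (leqnn _)).
split.
- rewrite E; have -> : W a :&: ~: S p q = W a by apply/setIidPl; exact: notouch.
  exact: ge3k_k.
- by exists a, c; split.
- by rewrite E setCK.
Qed.
End Comb.
End Tree.

Section MM.
Variables (V : finType) (e : rel V) (k : nat).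

Lemma mm_ge (X S1 S2 : {set V}) : S1 \subset X -> S2 \subset ~: X -> k <= #|S1| -> k <= #|S2| ->
  (forall x y, x \in S1 -> y \in S2 -> e x y) -> k <= mm e X.
Proof.
move=> s1 s2 h1 h2 hc.
case: k h1 h2 => [|k'] h1 h2; first by [].
have [x0 _] : exists x0, x0 \in S1 by apply/set0Pn; rewrite -card_gt0; apply: leq_trans h1.
have [y0 _] : exists y0, y0 \in S2 by apply/set0Pn; rewrite -card_gt0; apply: leq_trans h2.
set l1 := enum S1; set l2 := enum S2.
have z1 : k'.+1 <= size l1 by rewrite /l1 -cardE.
have z2 : k'.+1 <= size l2 by rewrite /l2 -cardE.
pose f := fun i : 'I_k'.+1 => (nth x0 l1 i, nth y0 l2 i).
have finj : injective f.
  move=> i j [] E _; apply: val_inj; apply/eqP.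
  rewrite -(@nth_uniq _ x0 l1) ?E ?enum_uniq //;
  by [apply: leq_trans (ltn_ord i) z1 | apply: leq_trans (ltn_ord j) z1].
have cm : cross_matching e X [set f i | i in 'I_k'.+1].
  apply/andP; split.
    apply/forallP => p; apply/implyP => /imsetP [i _ ->] /=.
    have i1 : nth x0 l1 i \in S1 by rewrite -mem_enum mem_nth // (leq_trans (ltn_ord i) z1).
    have i2 : nth y0 l2 i \in S2 by rewrite -mem_enum mem_nth // (leq_trans (ltn_ord i) z2).
    rewrite (subsetP s1 _ i1) /=.
    have := subsetP s2 _ i2; rewrite inE => ->; exact: hc.
  apply/forallP => p; apply/implyP => /imsetP [i _ ->].
  apply/forallP => q; apply/implyP => /imsetP [j _ ->] /=.
  apply/implyP => /orP [] /eqP.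
    move=> E; suff -> : i = j by [].
    apply: val_inj; apply/eqP; rewrite -(@nth_uniq _ x0 l1) ?E ?enum_uniq //;
    by [apply: leq_trans (ltn_ord i) z1 | apply: leq_trans (ltn_ord j) z1].
  move=> E; suff -> : i = j by [].
  apply: val_inj; apply/eqP; rewrite -(@nth_uniq _ y0 l2) ?E ?enum_uniq //;
    by [apply: leq_trans (ltn_ord i) z2 | apply: leq_trans (ltn_ord j) z2].
have := @leq_bigmax_cond _ (cross_matching e X) (fun Mt : {set V * V} => #|Mt|) _ cm.
by rewrite card_imset // card_ord.
Qed.
End MM.

Section SplitPart.
Variables (V U : finType) (e : rel V) (Pv : {set U}) (pe : rel U) (W : U -> {set V}) (k : nat).
Hypothesis (Hne : forall u, u \in Pv -> W u != set0)
  (HN3 : forall u w, u \in Pv -> w \in Pv -> u != w -> forall x y, x \in W u -> y \in W w -> e x y = pe u w)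
  (prime : forall V1, ~~ is_split Pv pe V1) (card4 : 3 < #|Pv|).

Lemma assign (X : {set V}) : tau2 Pv W X -> tau2 Pv W (~: X) ->
  exists V1 : {set U}, [/\ V1 \subset Pv, 1 < #|V1|, 1 < #|Pv :\: V1|,
     forall u, u \in V1 -> touch W X u & forall u, u \in Pv :\: V1 -> touch W (~: X) u].
Proof.
move=> [u1 [u2 [u1P u2P u12 t1 t2]]] [w1 [w2 [w1P w2P w12 s1 s2]]].
have tor : forall u, u \in Pv -> touch W X u || touch W (~: X) u.
  by move=> u uP; apply: (touch_or Hne).
set Ex := [set u in Pv | ~~ touch W (~: X) u].
case: (leqP 2 #|Ex|) => hE.
  exists Ex; split => //.
  - by apply/subsetP => u; rewrite inE => /andP [].
  - have : [set w1; w2] \subset Pv :\: Ex.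
      by apply/subsetP => u; rewrite !inE => /orP [] /eqP ->; rewrite ?s1 ?s2 ?w1P ?w2P.
    by move/subset_leq_card; rewrite cards2 w12.
  - move=> u; rewrite inE => /andP [uP nu]; move: (tor u uP); by rewrite (negbTE nu) orbF.
  - move=> u; rewrite !inE negb_and negbK => /andP [/orP [nu|//] uP].
    by rewrite uP in nu.
suff [x1 [x2 [x12 x1P x2P [tx1 tx2] cov]]] : exists x1 x2, [/\ x1 != x2, x1 \in Pv, x2 \in Pv,
   touch W X x1 /\ touch W X x2 & forall u, u \in Ex -> (u == x1) || (u == x2)].
  have sub : [set x1; x2] \subset Pv by apply/subsetP => u; rewrite !inE => /orP [] /eqP ->.
  exists [set x1; x2]; split => //.
  - by rewrite cards2 x12.
  - rewrite cardsD (setIidPr sub) cards2 x12; move: card4; clear; lia.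
  - by move=> u; rewrite !inE => /orP [] /eqP ->.
  - move=> u; rewrite !inE negb_or => /andP [/andP [n1 n2] uP].
    case: (boolP (touch W (~: X) u)) => // nt.
    have : u \in Ex by rewrite inE uP nt.
    by move/cov; rewrite (negbTE n1) (negbTE n2).
have exT : forall u, u \in Ex -> touch W X u.
  move=> u; rewrite inE => /andP [uP nu]; by move: (tor u uP); rewrite (negbTE nu) orbF.
case: (pickP [pred u | u \in Ex]) => [e1 /= e1E|E0].
  have one : forall u, u \in Ex -> u = e1.
    by move=> u uE; apply: (card_le1_eqP (ltnSE hE)).
  have e1P : e1 \in Pv by move: e1E; rewrite inE => /andP [].
  case: (eqVneq u1 e1) => [E1|n1].
    subst u1; exists e1, u2; split => //.
    by move=> u /one ->; rewrite eqxx.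
  exists e1, u1; split => //; first by rewrite eq_sym.
    by split => //; exact: exT.
  by move=> u /one ->; rewrite eqxx.
exists u1, u2; split => // u; by rewrite -[u \in Ex]/([pred u | u \in Ex] u) E0.
Qed.


Lemma not_split (X : {set V}) : tau2 Pv W X -> tau2 Pv W (~: X) -> ~~ is_split [set: V] e X.
Proof.
move=> h1 h2; have [V1 [sub c1 c2 tX tY]] := assign h1 h2.
apply/negP => /and4P [_ _ _ /forallP hs].
case/negP: (prime V1); apply/and4P; split => //.
apply/forallP => x; apply/implyP => xV; apply/forallP => x'; apply/implyP => x'V.
apply/implyP => /andP [/existsP [y0 /andP [y0D py0]] /existsP [y0' /andP [y0'D py0']]].
apply/forallP => y; apply/implyP => yD.
have neq : forall u w, u \in V1 -> w \in Pv :\: V1 -> u != w.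
  by move=> u w uV; rewrite inE => /andP [wV _]; apply: contraNneq wV => <-.
have inP : forall u, u \in V1 -> u \in Pv by move=> u; apply: (subsetP sub).
have inP' : forall u, u \in Pv :\: V1 -> u \in Pv by move=> u; rewrite inE => /andP [].
have [rx rxW rxX] := touchP _ _ _ (tX x xV).
have [rx' rx'W rx'X] := touchP _ _ _ (tX x' x'V).
have [ry0 ry0W ry0X] := touchP _ _ _ (tY y0 y0D).
have [ry0' ry0'W ry0'X] := touchP _ _ _ (tY y0' y0'D).
have [ry ryW ryX] := touchP _ _ _ (tY y yD).
rewrite -(HN3 (inP _ xV) (inP' _ yD) (neq _ _ xV yD) rxW ryW).
rewrite -(HN3 (inP _ x'V) (inP' _ yD) (neq _ _ x'V yD) rx'W ryW).
move: (hs rx) => /implyP /(_ rxX) /forallP /(_ rx') /implyP /(_ rx'X) /implyP H.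
have : [forall y1 in [set: V] :\: X, e rx y1 == e rx' y1].
  apply: H; apply/andP; split; apply/existsP.
    exists ry0; rewrite !inE -in_setC ry0X /=.
    by rewrite (HN3 (inP _ xV) (inP' _ y0D) (neq _ _ xV y0D) rxW ry0W).
  exists ry0'; rewrite !inE -in_setC ry0'X /=.
  by rewrite (HN3 (inP _ x'V) (inP' _ y0'D) (neq _ _ x'V y0'D) rx'W ry0'W).
by move/forallP /(_ ry) /implyP; apply; rewrite !inE -in_setC ryX.
Qed.

Lemma good_sm (X : {set V}) : Goodc e Pv W k X -> k <= sm e X.
Proof.
move=> [h1 [h2 [S1 [S2 [s1 s2 c1 c2 cc]]]]].
rewrite /sm (negbTE (not_split h1 h2)); exact: mm_ge s1 s2 c1 c2 cc.
Qed.
End SplitPart.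

Inductive reach (r : nat -> nat -> Prop) (x : nat) : nat -> Prop :=
| rrefl : reach r x x
| rstep y z : reach r x y -> r y z -> reach r x z.

Lemma reach1 (r : nat -> nat -> Prop) x y : r x y -> reach r x y.
Proof. move=> h; apply: rstep h; exact: rrefl. Qed.

Lemma reach_trans (r : nat -> nat -> Prop) x y z : reach r x y -> reach r y z -> reach r x z.
Proof. move=> h1 h2; elim: h2 => // a b _ IH rab; exact: rstep IH rab. Qed.

Lemma reach_map (r r' : nat -> nat -> Prop) (f : nat -> nat) x y :
  (forall a b, r a b -> reach r' (f a) (f b)) -> reach r x y -> reach r' (f x) (f y).
Proof. move=> H h; elim: h => [|a b _ IH rab]; first exact: rrefl. exact: reach_trans IH (H _ _ rab). Qed.

Lemma reach_sym (r : nat -> nat -> Prop) x y : (forall a b, r a b -> r b a) -> reach r x y -> reach r y x.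
Proof.
move=> hs h; elim: h => [|a b _ IH rab]; first exact: rrefl.
exact: reach_trans (reach1 (hs _ _ rab)) IH.
Qed.

Lemma reach_inv (r : nat -> nat -> Prop) (P : nat -> Prop) x y :
  P x -> (forall a b, P a -> r a b -> P b) -> reach r x y -> P y.
Proof. by move=> Px H h; elim: h => // a b _ IH rab; exact: H IH rab. Qed.

Lemma arith3 (a b a' b' i0 n : nat) : a < n -> b < n -> a <> b -> (a' = a \/ a = i0 /\ a' = n) ->
  (b' = b \/ b = i0 /\ b' = n) -> a' <> b'.
Proof. lia. Qed.

Lemma arith4 (j s s' i0 n : nat) : j = i0 \/ j = n -> s = i0 \/ s = n -> s' = i0 \/ s' = n ->
  s <> s' -> j <> s -> j = s'.
Proof. lia. Qed.

Section Decomp.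
Variables (V M : finType) (e : rel V).
Hypotheses (esym : symmetric e) (eirr : irreflexive e).
Notation U := (V + M)%type.
Notation ip := (init_part M e).
Notation nthp ps j := (nth ip ps j).

Definition adjN (ps : seq (part U)) (q a b : nat) : Prop :=
  [/\ a < size ps, b < size ps, a <> q, b <> q &
      a <> b /\ exists m, inr m \in pv (nthp ps a) /\ inr m \in pv (nthp ps b)].

Lemma adjN_sym ps q a b : adjN ps q a b -> adjN ps q b a.
Proof. by case=> h1 h2 h3 h4 [h5 [m [m1 m2]]]; split => //; split; [by move=> E; apply: h5|exists m]. Qed.

Definition T (ps : seq (part U)) (q : nat) (u : U) (x : V) : Prop :=
  match u with
  | inl y => x = y
  | inr m => exists j k, [/\ j < size ps, j <> q, inr m \in pv (nthp ps j),
               reach (adjN ps q) j k & inl x \in pv (nthp ps k)]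
  end.

Definition A (Tu : V -> Prop) (x : V) : Prop := Tu x /\ exists y, ~ Tu y /\ e y x.

Lemma reach_lt ps q j k : reach (adjN ps q) j k -> j < size ps -> k < size ps.
Proof. by move=> h; elim: h => // a b _ IH [_ ->]. Qed.

Lemma reach_ne ps q j k : reach (adjN ps q) j k -> j <> q -> k <> q.
Proof. by move=> h; elim: h => // a b _ IH [_ _ _ h4]. Qed.

Lemma tot_T ps (i : 'I_(size ps)) u x : (x \in tot e i u) <-> T ps i u x.
Proof.
case: u => [y|m] /=; first by rewrite inE; split; [move/eqP|move=> ->].
rewrite inE; split.
  case/existsP => j /existsP [k /and4P [ji mj cjk xk]].
  exists j, k; split => //; first by apply/eqP.
  move: cjk; apply: (connect_ind' (P := fun k : 'I_(size ps) => reach (adjN ps i) j k)); first exact: rrefl.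
  move=> a b IH /and3P [ai bi /andP [ab /existsP [m' /andP [m1 m2]]]]; apply: rstep IH _.
  split => //; try by apply/eqP.
  by split; [move=> E; move: ab; rewrite -val_eqE /= E eqxx | exists m'].
case=> j [k [jn ji mj rjk xk]].
have kn : k < size ps by apply: reach_lt rjk jn.
apply/existsP; exists (Ordinal jn); apply/existsP; exists (Ordinal kn).
apply/and4P; split => //; first by apply/eqP => /(congr1 val) /=.
have : forall kk (kkn : kk < size ps), reach (adjN ps i) j kk ->
    connect [rel a b | [&& a != i, b != i & tadj e a b]] (Ordinal jn) (Ordinal kkn).
  move=> kk kkn h; elim: h kkn => [|a b h IH [an bn ai bi [ab [m' [m1 m2]]]]] kkn.
    by rewrite (bool_irrelevance kkn jn) connect0.
  apply: connect_trans (IH an) (connect1 _) => /=.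
  apply/and3P; split; try by apply/eqP => /(congr1 val) /=.
  apply/andP; split; first by apply/eqP => /(congr1 val) /=.
  by apply/existsP; exists m'; rewrite /pt /= m1 m2.
by apply.
Qed.

Lemma act_A ps (i : 'I_(size ps)) u x : (x \in act e i u) <-> A (T ps i u) x.
Proof.
have tt := @tot_T ps i u.
rewrite /act /nbhdG inE; split.
  case/andP => h /existsP [y /andP [yo eyx]]; move: h; rewrite inE negbK => h.
  split; first exact: (tt x).1.
  exists y; split => // /(tt y).2 hy; by rewrite inE hy in yo.
case=> h [y [ny eyx]]; apply/andP; split; first by rewrite inE negbK; exact: (tt x).2.
by apply/existsP; exists y; rewrite inE eyx andbT; apply/negP => /(tt y).1.
Qed.


Record PInv (P : part U) (Tf : U -> V -> Prop) : Prop := {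
  pi_sym : forall x y, pe P x y = pe P y x;
  pi_irr : forall u, pe P u u = false;
  pi_dis : forall u w x, u \in pv P -> w \in pv P -> u != w -> Tf u x -> Tf w x -> False;
  pi_ne : forall u, u \in pv P -> exists x, Tf u x;
  pi_cov : forall x, exists2 u, u \in pv P & Tf u x;
  pi_e : forall u w x y, u \in pv P -> w \in pv P -> u != w -> Tf u x -> Tf w y -> e x y -> pe P u w;
  pi_pe : forall u w x y, u \in pv P -> w \in pv P -> u != w -> pe P u w ->
            A (Tf u) x -> A (Tf w) y -> e x y }.

Definition splitP (r : rel U) (Ws Ws' : {set U}) := forall x x', x \in Ws -> x' \in Ws ->
  (exists y, y \in Ws' /\ r x y) -> (exists y, y \in Ws' /\ r x' y) -> forall y, y \in Ws' -> r x y = r x' y.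

Lemma split1 (S : {set U}) r V1 : is_split S r V1 -> splitP r V1 (S :\: V1).
Proof.
case/and4P => _ _ _ /forallP H x x' xV x'V [y0 [y0D r0]] [y1 [y1D r1]] y yD.
move: (H x) => /implyP /(_ xV) /forallP /(_ x') /implyP /(_ x'V) /implyP H2.
have pre : [exists y in S :\: V1, r x y] && [exists y in S :\: V1, r x' y].
  by apply/andP; split; apply/existsP; [exists y0|exists y1]; rewrite ?y0D ?y1D.
by move: (H2 pre) => /forallP /(_ y) /implyP /(_ yD) /eqP.
Qed.

Lemma split2 (S : {set U}) r V1 : symmetric r -> is_split S r V1 -> splitP r (S :\: V1) V1.
Proof.
move=> rs hs; have h1 := split1 hs.
have key : forall v y0 y, v \in S :\: V1 -> y0 \in V1 -> r v y0 -> y \in V1 ->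
    r v y = [exists w in S :\: V1, r y w].
  move=> v y0 y vD y0V rv yV; apply/idP/idP => [ry|/existsP [w /andP [wD ryw]]].
    by apply/existsP; exists v; rewrite vD /= rs.
  rewrite rs (h1 y y0 yV y0V _ _ v vD); [by rewrite rs | by exists w | by exists v; rewrite rs].
move=> x x' xD x'D [y0 [y0V r0]] [y1 [y1V r1]] y yV.
by rewrite (key x y0 y) // (key x' y1 y).
Qed.

Lemma PInv_ext P Tf Tg : PInv P Tf -> (forall u, u \in pv P -> forall x, Tg u x <-> Tf u x) -> PInv P Tg.
Proof.
move=> [h1 h2 h3 h4 h5 h6 h7] E.
have EA : forall u, u \in pv P -> forall x, A (Tg u) x <-> A (Tf u) x.
  move=> u uP x; rewrite /A; split=> [[a [y [b c]]]|[a [y [b c]]]].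
    split; first exact: (E u uP x).1.
    by exists y; split => // hg; apply: b; exact: (E u uP y).2.
  split; first exact: (E u uP x).2.
  by exists y; split => // hg; apply: b; exact: (E u uP y).1.
split => //.
- by move=> u w x uP wP uw hu hw; exact: h3 uP wP uw ((E u uP x).1 hu) ((E w wP x).1 hw).
- by move=> u uP; have [x hx] := h4 u uP; exists x; exact: (E u uP x).2.
- by move=> x; have [u uP hx] := h5 x; exists u => //; exact: (E u uP x).2.
- by move=> u w x y uP wP uw hu hw; apply: h6 uP wP uw ((E u uP x).1 hu) ((E w wP y).1 hw).
- by move=> u w x y uP wP uw puw hu hw; apply: h7 uP wP uw puw ((EA u uP x).1 hu) ((EA w wP y).1 hw).
Qed.

Lemma side_pv (p : part U) Ws Ws' z u : (u \in pv (side p Ws Ws' z)) = (u \in Ws) || (u == z).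
Proof. by rewrite /side /= !inE orbC. Qed.

Lemma side_pe (p : part U) Ws Ws' z x y : pe (side p Ws Ws' z) x y =
  [&& x \in Ws, y \in Ws & pe p x y]
  || ((x == z) && (y \in nbr_out (pv p) (pe p) Ws'))
  || ((y == z) && (x \in nbr_out (pv p) (pe p) Ws')).
Proof. by []. Qed.

Lemma nbr_outP (S Ws' : {set U}) (r : rel U) y :
  reflect [/\ y \in S, y \notin Ws' & exists2 x, x \in Ws' & r x y] (y \in nbr_out S r Ws').
Proof.
rewrite /nbr_out inE; apply: (iffP and3P) => [[a b /existsP [x /andP [c d]]]|[a b [x c d]]].
  by split => //; exists x.
by split => //; apply/existsP; exists x; rewrite c.
Qed.

Lemma side_PInv (p : part U) (Told Tnew : U -> V -> Prop) (Ws Ws' : {set U}) z :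
  PInv p Told -> z \notin pv p -> Ws :|: Ws' = pv p -> [disjoint Ws & Ws'] -> Ws' != set0 ->
  splitP (pe p) Ws Ws' ->
  (forall u, u \in Ws -> forall x, Tnew u x <-> Told u x) ->
  (forall x, Tnew z x <-> exists2 w, w \in Ws' & Told w x) ->
  PInv (side p Ws Ws' z) Tnew.
Proof.
move=> [h1 h2 h3 h4 h5 h6 h7] zp cov dis ne sp EWs Ez.
have WsP : forall u, u \in Ws -> u \in pv p by move=> u uW; rewrite -cov inE uW.
have Ws'P : forall u, u \in Ws' -> u \in pv p by move=> u uW; rewrite -cov inE uW orbT.
have zWs : z \notin Ws by apply: contra zp; exact: WsP.
have zWs' : z \notin Ws' by apply: contra zp; exact: Ws'P.
have dW : forall u w, u \in Ws -> w \in Ws' -> u != w.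
  by move=> u w uW wW; apply: contraTneq wW => <-; rewrite (disjointFr dis uW).
have psym : forall x y, pe (side p Ws Ws' z) x y = pe (side p Ws Ws' z) y x.
  move=> x y; rewrite !side_pe h1.
  by case: (x \in Ws); case: (y \in Ws); case: (x == z); case: (y == z);
    case: (x \in nbr_out _ _ _); case: (y \in nbr_out _ _ _); rewrite /= ?andbF ?orbF ?orbT.
have pz : forall u, u \in Ws -> pe (side p Ws Ws' z) u z = (u \in nbr_out (pv p) (pe p) Ws').
  move=> u uW; have uz : u != z by apply: contraTneq uW => ->.
  by rewrite side_pe (negbTE zWs) andbF eqxx (negbTE uz).
have EA : forall u, u \in Ws -> forall x, A (Tnew u) x <-> A (Told u) x.
  move=> u uW x; rewrite /A; split=> [[a [y [b c]]]|[a [y [b c]]]].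
    split; first exact: (EWs u uW x).1.
    by exists y; split => // hg; apply: b; exact: (EWs u uW y).2.
  split; first exact: (EWs u uW x).2.
  by exists y; split => // hg; apply: b; exact: (EWs u uW y).1.
have ez : forall u x y, u \in Ws -> Tnew u x -> Tnew z y -> e x y -> pe (side p Ws Ws' z) u z.
  move=> u x y uW hu /Ez [w wW hw] exy; rewrite pz //; apply/nbr_outP; split; first exact: WsP.
    by apply/negP => uW'; move: (dW _ _ uW uW'); rewrite eqxx.
  exists w => //; apply: (h6 w u y x (Ws'P _ wW) (WsP _ uW)) => //.
    by rewrite eq_sym; exact: dW.
    exact: (EWs u uW x).1.
  by rewrite esym.
have pez : forall u x y, u \in Ws -> pe (side p Ws Ws' z) u z -> A (Tnew u) x -> A (Tnew z) y -> e x y.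
  move=> u x y uW; rewrite pz // => /nbr_outP [uP uW' [w0 w0W pw0u]] /(EA u uW) hu [hy [x' [nx' ex'y]]].
  have [w wW hwy] := (Ez y).1 hy.
  have [u' u'P hu'] := h5 x'.
  have u'W : u' \in Ws.
    move: u'P; rewrite -cov inE => /orP [//|u'W']; case: nx'; apply/Ez; by exists u'.
  have pwu' : pe p w u'.
    apply: (h6 w u' y x' (Ws'P _ wW) (WsP _ u'W)) => //; last by rewrite esym.
    by rewrite eq_sym; exact: (dW _ _ u'W wW).
  have Aw : A (Told w) y.
    split => //; exists x'; split => // hw; apply: (h3 w u' x' (Ws'P _ wW) (WsP _ u'W)) => //.
    by rewrite eq_sym; exact: dW.
  have puw : pe p u w.
    rewrite (sp u u' uW u'W _ _ w wW); first by rewrite h1.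
      by exists w0; rewrite h1.
    by exists w; rewrite h1.
  exact: (h7 u w x y (WsP _ uW) (Ws'P _ wW) (dW _ _ uW wW) puw hu Aw).
split => //.
- move=> u; rewrite side_pe h2 !andbF /= orbb.
  by apply/negP => /andP [/eqP -> /nbr_outP [zP _ _]]; rewrite zP in zp.
- move=> u w x; rewrite !side_pv => /orP [uW|/eqP->] /orP [wW|/eqP->] uw hu hw.
  + exact: (h3 u w x (WsP _ uW) (WsP _ wW) uw ((EWs u uW x).1 hu) ((EWs w wW x).1 hw)).
  + have [w' w'W hw'] := (Ez x).1 hw.
    exact: (h3 u w' x (WsP _ uW) (Ws'P _ w'W) (dW _ _ uW w'W) ((EWs u uW x).1 hu) hw').
  + have [w' w'W hw'] := (Ez x).1 hu.
    exact: (h3 w w' x (WsP _ wW) (Ws'P _ w'W) (dW _ _ wW w'W) ((EWs w wW x).1 hw) hw').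
  + by rewrite eqxx in uw.
- move=> u; rewrite side_pv => /orP [uW|/eqP->].
    have [x hx] := h4 u (WsP _ uW); exists x; exact: (EWs u uW x).2.
  have [w wW] := set0Pn _ ne; have [x hx] := h4 w (Ws'P _ wW); exists x; apply/Ez; by exists w.
- move=> x; have [u uP hu] := h5 x; move: uP; rewrite -cov inE => /orP [uW|uW'].
    by exists u; rewrite ?side_pv ?uW //; exact: (EWs u uW x).2.
  by exists z; rewrite ?side_pv ?eqxx ?orbT //; apply/Ez; exists u.
- move=> u w x y; rewrite !side_pv => /orP [uW|/eqP->] /orP [wW|/eqP->] uw hu hw exy.
  + have := h6 u w x y (WsP _ uW) (WsP _ wW) uw ((EWs u uW x).1 hu) ((EWs w wW y).1 hw) exy.
    by rewrite side_pe uW wW => ->.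
  + exact: ez uW hu hw exy.
  + rewrite psym; apply: ez wW hw hu _; by rewrite esym.
  + by rewrite eqxx in uw.
- move=> u w x y; rewrite !side_pv => /orP [uW|/eqP->] /orP [wW|/eqP->] uw puw hu hw.
  + have uz : u != z by apply: contraTneq uW => ->.
    have wz : w != z by apply: contraTneq wW => ->.
    have puw' : pe p u w by move: puw; rewrite side_pe uW wW (negbTE uz) (negbTE wz) /= !orbF.
    exact: (h7 u w x y (WsP _ uW) (WsP _ wW) uw puw' ((EA u uW x).1 hu) ((EA w wW y).1 hw)).
  + exact: pez uW puw hu hw.
  + rewrite esym; apply: pez wW _ hw hu; by rewrite psym.
  + by rewrite eqxx in uw.
Qed.

Definition S1 (ps : seq (part U)) q := forall m', inr m' \in pv (nthp ps q) ->
  (exists j, [/\ j < size ps, j <> q & inr m' \in pv (nthp ps j)]) /\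
  (forall j1 j2, j1 < size ps -> j2 < size ps -> j1 <> q -> j2 <> q ->
     inr m' \in pv (nthp ps j1) -> inr m' \in pv (nthp ps j2) -> j1 = j2).

Definition INV (ps : seq (part U)) := forall q, q < size ps -> PInv (nthp ps q) (T ps q) /\ S1 ps q.

Section Step.
Variables (ps : seq (part U)) (i0 : nat) (V1 : {set U}) (m : M).
Hypotheses (i0n : i0 < size ps) (hsplit : is_split (pv (nthp ps i0)) (pe (nthp ps i0)) V1)
  (fresh : forall j, j < size ps -> inr m \notin pv (nthp ps j)) (Hinv : INV ps).
Let n := size ps.
Let p := nthp ps i0.
Let V2 := pv p :\: V1.
Let z : U := inr m.
Let p1 := side p V1 V2 z.
Let p2 := side p V2 V1 z.
Let ps' := rcons (set_nth ip ps i0 p1) p2.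

Lemma size' : size ps' = n.+1.
Proof. by rewrite /ps' size_rcons size_set_nth (maxn_idPr i0n). Qed.

Lemma nth' j : nthp ps' j = if j == i0 then p1 else if j == n then p2 else nthp ps j.
Proof.
rewrite /ps' nth_rcons size_set_nth (maxn_idPr i0n) nth_set_nth /=.
case: (ltnP j n) => jn.
  by case: (eqVneq j i0); rewrite // (ltn_eqF jn).
case: (eqVneq j i0) => [E|_]; first by move: jn; rewrite E leqNgt i0n.
by case: (eqVneq j n) => // _; rewrite nth_default.
Qed.

Lemma i0_ne_n : i0 <> n. Proof. by move=> E; move: i0n; rewrite E ltnn. Qed.

Lemma nth'_old j : j <> i0 -> j <> n -> nthp ps' j = nthp ps j.
Proof. by move=> /eqP/negbTE h1 /eqP/negbTE h2; rewrite nth' h1 h2. Qed.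

Lemma nth'_i0 : nthp ps' i0 = p1. Proof. by rewrite nth' eqxx. Qed.
Lemma nth'_n : nthp ps' n = p2.
Proof. by rewrite nth' eqxx; case: eqP => // E; case: i0_ne_n. Qed.

Lemma V1sub : V1 \subset pv p. Proof. by case/and4P: hsplit. Qed.
Lemma cov12 : V1 :|: V2 = pv p.
Proof.
apply/setP => u; rewrite !inE; case: (boolP (u \in V1)) => //= uV.
by rewrite (subsetP V1sub u uV).
Qed.
Lemma dis12 : [disjoint V1 & V2].
Proof. by rewrite -setI_eq0; apply/eqP/setP => u; rewrite !inE; case: (u \in V1). Qed.
Lemma zp : z \notin pv p. Proof. exact: fresh. Qed.
Lemma V2ne : V2 != set0.
Proof. by case/and4P: hsplit => _ _ h _; rewrite -card_gt0; apply: ltnW. Qed.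
Lemma V1ne : V1 != set0.
Proof. by case/and4P: hsplit => _ h _ _; rewrite -card_gt0; apply: ltnW. Qed.
Lemma pv1 u : (u \in pv p1) = (u \in V1) || (u == z). Proof. exact: side_pv. Qed.
Lemma pv2 u : (u \in pv p2) = (u \in V2) || (u == z). Proof. exact: side_pv. Qed.

Definition f (j : nat) := if j == n then i0 else j.

Lemma f_lt j : j < n.+1 -> f j < n.
Proof. by rewrite /f ltnS leq_eqVlt; case: eqP => //= _. Qed.

Lemma pv_old j u : u != z -> u \in pv (nthp ps' j) -> u \in pv (nthp ps (f j)).
Proof.
move=> uz; rewrite nth' /f; case: (eqVneq j i0) => [->|ji].
  rewrite pv1 (negbTE uz) orbF if_same => uV.
  exact: (subsetP V1sub).
case: (eqVneq j n) => // _; rewrite pv2 (negbTE uz) orbF inE => /andP [] //.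
Qed.

Lemma z_loc j : j < n.+1 -> z \in pv (nthp ps' j) -> j = i0 \/ j = n.
Proof.
move=> jn; rewrite nth'; case: (eqVneq j i0) => [->|_]; first by left.
case: (eqVneq j n) => [->|jn']; first by right.
move=> h; have jn2 : j < n by move: jn; rewrite ltnS leq_eqVlt (negbTE jn').
by move: (fresh jn2); rewrite h.
Qed.

Lemma mem_old_new j u : j < n -> j <> i0 -> (u \in pv (nthp ps' j)) = (u \in pv (nthp ps j)).
Proof. by move=> jn ji; rewrite nth'_old //; move=> E; move: jn; rewrite E ltnn. Qed.

Lemma link q : q <> i0 -> q <> n -> adjN ps' q i0 n.
Proof.
move=> q1 q2; rewrite /adjN size'; split => //; first exact: ltnW.
  by move=> E; apply: q1.
  by move=> E; apply: q2.
split; first exact: i0_ne_n.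
by exists m; rewrite nth'_i0 nth'_n pv1 pv2 !eqxx !orbT.
Qed.

Lemma lift_mem c u : c < n -> u != z -> u \in pv (nthp ps c) ->
  exists c', u \in pv (nthp ps' c') /\ (c' = c \/ (c = i0 /\ c' = n)).
Proof.
move=> cn uz uc; case: (eqVneq c i0) => [E|ci].
  subst c; have : u \in V1 :|: V2 by rewrite cov12.
  rewrite inE => /orP [u1|u2].
    by exists i0; rewrite nth'_i0 pv1 u1; split => //; left.
  by exists n; rewrite nth'_n pv2 u2; split => //; right.
exists c; split; last by left.
by rewrite mem_old_new //; apply/eqP.
Qed.

Lemma n_lt_size' : n < size ps'. Proof. by rewrite size'. Qed.

Lemma F1 q : q < n -> q <> i0 -> forall a b, adjN ps' q a b -> reach (adjN ps q) (f a) (f b).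
Proof.
move=> qn qi a b [an bn aq bq [ab [m'' [ma mb]]]]; rewrite size' in an bn.
case: (eqVneq (inr m'' : U) z) => [E|mz].
  rewrite E in ma mb.
  by case: (z_loc an ma) => ->; case: (z_loc bn mb) => ->; rewrite /f ?eqxx ?if_same; exact: rrefl.
case: (eqVneq (f a) (f b)) => [->|fab]; first exact: rrefl.
have fne : forall c, c <> q -> f c <> q.
  by move=> c cq; rewrite /f; case: eqP => // _ E; apply: qi; rewrite E.
apply: reach1; split; rewrite ?f_lt //; try exact: fne.
split; first exact/eqP.
by exists m''; rewrite !pv_old.
Qed.

Lemma F2 q : q < n -> q <> i0 -> forall a b, adjN ps q a b -> reach (adjN ps' q) a b.
Proof.
move=> qn qi a b [an bn aq bq [ab [m'' [ma mb]]]].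
have qn' : q <> n by move=> E; move: qn; rewrite E ltnn.
have mz : (inr m'' : U) != z by apply: contraTneq ma => ->; exact: fresh.
have [a' [ma' ha]] := lift_mem an mz ma.
have [b' [mb' hb]] := lift_mem bn mz mb.
have ra : reach (adjN ps' q) a a'.
  case: (ha) => [->|[-> ->]]; [exact: rrefl | exact: reach1 (link qi qn')].
have rb : reach (adjN ps' q) b' b.
  case: (hb) => [->|[-> ->]]; [exact: rrefl | exact: reach1 (adjN_sym (link qi qn'))].
apply: reach_trans ra (reach_trans (reach1 _) rb).
have ltn' : forall c c', c < n -> (c' = c \/ c = i0 /\ c' = n) -> c' < size ps'.
  by move=> c c' cn [->|[_ ->]]; rewrite size' // ltnW.
have neq' : forall c c', c <> q -> (c' = c \/ c = i0 /\ c' = n) -> c' <> q.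
  by move=> c c' cq [->|[_ ->]] // E; apply: qn'.
split; try exact: ltn' ha; try exact: ltn' hb; try exact: neq' ha; try exact: neq' hb.
split; last by exists m''.
exact: arith3 an bn ab ha hb.
Qed.

Lemma E1 q u x : q < n -> q <> i0 -> u \in pv (nthp ps q) -> T ps' q u x <-> T ps q u x.
Proof.
move=> qn qi uq; case: u uq => [y|m'] uq //=.
have qn' : q <> n by move=> E; move: qn; rewrite E ltnn.
have mz : (inr m' : U) != z by apply: contraTneq uq => ->; exact: fresh.
have xz : (inl x : U) != z by [].
split.
  case=> j' [k' [jn ji mj rjk xk]].
  exists (f j'), (f k'); split.
  - by apply: f_lt; rewrite -size'.
  - by rewrite /f; case: eqP => // _ E; apply: qi; rewrite E.
  - exact: pv_old.
  - exact: reach_map (F1 qn qi) rjk.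
  - exact: pv_old.
case=> j [k [jn ji mj rjk xk]].
have kn : k < n by apply: reach_lt rjk jn.
have [j' [mj' hj]] := lift_mem jn mz mj.
have [k' [xk' hk]] := lift_mem kn xz xk.
exists j', k'; split => //.
- by case: hj => [->|[_ ->]]; rewrite size' // ltnW.
- by case: hj => [->|[_ ->]] // E; apply: qn'.
- apply: reach_trans (reach_trans _ (reach_map (f:=id) (F2 qn qi) rjk)) _.
    by case: hj => [->|[-> ->]]; [exact: rrefl | exact: reach1 (adjN_sym (link qi qn'))].
  by case: hk => [->|[-> ->]]; [exact: rrefl | exact: reach1 (link qi qn')].
Qed.

Definition Conf s s' Ws Ws' := (s = i0 /\ s' = n /\ Ws = V1 /\ Ws' = V2) \/ (s = n /\ s' = i0 /\ Ws = V2 /\ Ws' = V1).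

Lemma conf_sym s s' Ws Ws' : Conf s s' Ws Ws' -> Conf s' s Ws' Ws.
Proof. by case=> [[-> [-> [-> ->]]]|[-> [-> [-> ->]]]]; [right|left]. Qed.

Lemma conf_nth s s' Ws Ws' : Conf s s' Ws Ws' -> nthp ps' s = side p Ws Ws' z.
Proof. by case=> [[-> [_ [-> ->]]]|[-> [_ [-> ->]]]]; rewrite ?nth'_i0 ?nth'_n. Qed.

Lemma conf_ne s s' Ws Ws' : Conf s s' Ws Ws' -> s <> s'.
Proof. by case=> [[-> [-> _]]|[-> [-> _]]] => // E; apply: i0_ne_n. Qed.

Lemma conf_lt s s' Ws Ws' : Conf s s' Ws Ws' -> s < n.+1.
Proof. by case=> [[-> _]|[-> _]] //; apply: ltnW. Qed.

Lemma conf_other s s' Ws Ws' j : Conf s s' Ws Ws' -> j <> s -> j <> s' -> j <> i0 /\ j <> n.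
Proof. by case=> [[-> [-> _]]|[-> [-> _]]]. Qed.

Lemma conf_sub s s' Ws Ws' : Conf s s' Ws Ws' -> Ws \subset pv p.
Proof.
case=> [[_ [_ [-> _]]]|[_ [_ [-> _]]]]; first exact: V1sub.
by apply/subsetP => u; rewrite inE => /andP [].
Qed.

Lemma conf_dis s s' Ws Ws' : Conf s s' Ws Ws' -> [disjoint Ws & Ws'].
Proof. by case=> [[_ [_ [-> ->]]]|[_ [_ [-> ->]]]]; rewrite ?dis12 // disjoint_sym dis12. Qed.

Lemma conf_cov s s' Ws Ws' : Conf s s' Ws Ws' -> Ws :|: Ws' = pv p.
Proof. by case=> [[_ [_ [-> ->]]]|[_ [_ [-> ->]]]]; rewrite ?cov12 // setUC cov12. Qed.

Lemma conf_s s s' Ws Ws' : Conf s s' Ws Ws' -> s = i0 \/ s = n.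
Proof. by case=> [[-> _]|[-> _]]; [left|right]. Qed.

Lemma old_inv : PInv p (T ps i0) /\ S1 ps i0. Proof. exact: Hinv. Qed.

Lemma new_old j u : j < n.+1 -> j <> i0 -> j <> n -> (u \in pv (nthp ps' j)) = (u \in pv (nthp ps j)).
Proof. by move=> jn h1 h2; rewrite nth'_old. Qed.

Lemma lt_n j : j < n.+1 -> j <> n -> j < n.
Proof. by rewrite ltnS leq_eqVlt => /orP [/eqP ->|]. Qed.

Lemma E2 s s' Ws Ws' u x : Conf s s' Ws Ws' -> u \in Ws -> T ps' s u x <-> T ps i0 u x.
Proof.
move=> C uW; have [[_ _ h3 h4 _ _ _] hS1] := old_inv.
have Cs := conf_sym C.
case: u uW => [y|m'] uW //=.
have mP : (inr m' : U) \in pv p := subsetP (conf_sub C) _ uW.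
have mz : (inr m' : U) != z by apply: contraTneq mP => ->; exact: zp.
have mW' : (inr m' : U) \notin Ws' by rewrite (disjointFr (conf_dis C) uW).
have sn := conf_ne C.
split.
  case=> j' [k' [jn js mj rjk xk]]; rewrite size' in jn.
  have js' : j' <> s'.
    move=> E; move: mj; rewrite E (conf_nth Cs) side_pv (negbTE mz) orbF; exact/negP.
  have [ji jn'] := conf_other C js js'.
  have jn2 := lt_n jn jn'.
  rewrite new_old // in mj.
  suff : k' < n /\ k' <> i0 /\ reach (adjN ps i0) j' k'.
    case=> kn [ki rk]; exists j', k'; split => //.
    have knn : k' <> n by move=> E; move: kn; rewrite E ltnn.
    by rewrite -(new_old _ (ltnW kn) ki knn).
  move: rjk; apply: (reach_inv (P := fun k => k < n /\ k <> i0 /\ reach (adjN ps i0) j' k)).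
    by split => //; split => //; exact: rrefl.
  move=> a b [an [ai ra]] [_ bn _ bs [ab [mw [ma mb]]]]; rewrite size' in bn.
  have an' : a <> n by move=> E; move: an; rewrite E ltnn.
  rewrite new_old // in ma; last exact: ltnW.
  have bs' : b <> s'.
    move=> E; move: mb; rewrite E (conf_nth Cs) side_pv => /orP [mwW'|/eqP mwz].
      have mwP : (inr mw : U) \in pv p by rewrite -(conf_cov C) inE mwW' orbT.
      have [y hy] := h4 _ mwP.
      case: hy => j2 [k2 [j2n j2i mj2 r2 yk]].
      have E2 : j2 = a by apply: (proj2 (hS1 _ mwP)).
      subst j2; apply: (h3 (inr m') (inr mw) y mP mwP).
      - by apply: contraNneq mW' => ->.
      - by exists j', k2; split => //; exact: reach_trans ra r2.
      - by exists a, k2.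
    by case: mwz => mwe; subst mw; rewrite (negbTE (fresh an)) in ma.
  have [bi bn'] := conf_other C bs bs'.
  have bn2 := lt_n bn bn'.
  rewrite new_old // in mb.
  split => //; split => //; apply: rstep ra _; split => //; split => //; by exists mw.
case=> j [k [jn ji mj rjk xk]].
have kn := reach_lt rjk jn.
have ki := reach_ne rjk ji.
have neq : forall c, c < n -> c <> i0 -> c <> s.
  move=> c cn ci; case: (conf_s C) => -> // E; by move: cn; rewrite E ltnn.
have nn : forall c, c < n -> c <> n by move=> c cn E; move: cn; rewrite E ltnn.
have lt1 : forall c, c < n -> c < size ps' by move=> c cn; rewrite size'; apply: ltnW.
exists j, k; split.
- exact: lt1.
- exact: neq.
- by rewrite new_old //; [apply: ltnW | apply: nn].
- apply: (reach_map (f:=id)) rjk => a b [an bn ai bi [ab hm]].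
  apply: reach1; split; try exact: lt1; try exact: neq.
  split => //; case: hm => mw [ma mb]; exists mw.
  by rewrite !new_old //; try apply: ltnW; try apply: nn.
- by rewrite new_old //; [apply: ltnW | apply: nn].
Qed.

Lemma E3 s s' Ws Ws' x : Conf s s' Ws Ws' ->
  T ps' s z x <-> exists2 w, w \in Ws' & T ps i0 w x.
Proof.
move=> C; have Cs := conf_sym C.
have sn := conf_ne C.
have s'lt := conf_lt Cs.
have Ws'P : forall w, w \in Ws' -> w \in pv p by move=> w; apply: (subsetP (conf_sub Cs)).
have nn : forall c, c < n -> c <> n by move=> c cn E; move: cn; rewrite E ltnn.
have neq : forall c, c < n -> c <> i0 -> c <> s.
  move=> c cn ci; case: (conf_s C) => -> // E; by move: cn; rewrite E ltnn.
have neq' : forall c, c < n -> c <> i0 -> c <> s'.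
  move=> c cn ci; case: (conf_s Cs) => -> // E; by move: cn; rewrite E ltnn.
have lt1 : forall c, c < n -> c < size ps' by move=> c cn; rewrite size'; apply: ltnW.
have ns' : nthp ps' s' = side p Ws' Ws z := conf_nth Cs.
split.
  case=> j' [k' [jn js mj rjk xk]]; rewrite size' in jn.
  have js' : j' = s'.
    case: (z_loc jn mj) => E; case: (conf_s C) => E1; case: (conf_s Cs) => E2; subst j';
      rewrite -?E1 -?E2 in js *; try done; by move: sn; rewrite E1 E2.
  subst j'.
  suff : k' = s' \/ (k' < n /\ k' <> i0 /\ exists2 w, w \in Ws' /\ (exists mw, w = inr mw) &
           exists j2, [/\ j2 < n, j2 <> i0, w \in pv (nthp ps j2) & reach (adjN ps i0) j2 k']).
    case=> [E|[kn [ki [w [wW [mw Ew]] [j2 [j2n j2i wj2 r2]]]]]].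
      subst k'; move: xk; rewrite ns' side_pv => /orP [xW|//].
      by exists (inl x).
    exists w => //; subst w; exists j2, k'; split => //.
    by rewrite -(new_old _ (ltnW kn) ki (nn _ kn)).
  move: rjk; apply: (reach_inv (P := fun k' => k' = s' \/ (k' < n /\ k' <> i0 /\
     exists2 w, w \in Ws' /\ (exists mw, w = inr mw) &
           exists j2, [/\ j2 < n, j2 <> i0, w \in pv (nthp ps j2) & reach (adjN ps i0) j2 k']))).
    by left.
  move=> a b Ha [an bn _ bs [ab [mw [ma mb]]]]; rewrite size' in an bn.
  case: (eqVneq b s') => [->|bs']; first by left.
  have bs'' : b <> s' by apply/eqP.
  have [bi bn'] := conf_other C bs bs''.
  have bn2 := lt_n bn bn'.
  rewrite new_old // in mb.
  have mwz : (inr mw : U) != z by apply: contraTneq mb => ->; exact: fresh.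
  right; split => //; split => //.
  case: Ha => [Ea|[an2 [ai [w [wW [mw' Ew]] [j2 [j2n j2i wj2 r2]]]]]].
    subst a; move: ma; rewrite ns' side_pv (negbTE mwz) orbF => mwW.
    exists (inr mw); first by split => //; exists mw.
    by exists b; split => //; exact: rrefl.
  exists w; first by split => //; exists mw'.
  exists j2; split => //; apply: rstep r2 _; split => //.
  split => //; exists mw; split => //.
  by rewrite -(new_old _ (ltnW an2) ai (nn _ an2)).
case=> w wW; case: w wW => [y|mw] wW /=.
  move=> ->; exists s', s'; split => //.
  - by rewrite size'.
  - by move=> E; apply: sn.
  - by rewrite ns' side_pv eqxx orbT.
  - exact: rrefl.
  - by rewrite ns' side_pv wW.
case=> j2 [k2 [j2n j2i mj2 r2 xk2]].
have k2n := reach_lt r2 j2n.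
have k2i := reach_ne r2 j2i.
exists s', k2; split => //.
- by rewrite size'.
- by move=> E; apply: sn.
- by rewrite ns' side_pv eqxx orbT.
- apply: reach_trans (reach1 (_ : adjN ps' s s' j2)) _.
    split.
    + by rewrite size'.
    + exact: lt1.
    + by move=> E; apply: sn.
    + exact: neq.
    split; first by move=> E; apply: (neq' _ j2n j2i).
    exists mw; split; first by rewrite ns' side_pv wW.
    by rewrite new_old //; [apply: leqW | apply: nn].
  apply: (reach_map (f:=id)) r2 => a b [an bn ai bi [ab hm]].
  apply: reach1; split; try exact: lt1; try exact: neq.
  split => //; case: hm => mw' [ma mb]; exists mw'.
  by rewrite !new_old //; try apply: leqW; try apply: nn.
- by rewrite new_old //; [apply: leqW | apply: nn].
Qed.

Lemma conf_split s s' Ws Ws' : Conf s s' Ws Ws' -> splitP (pe p) Ws Ws'.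
Proof.
have [[h1 _ _ _ _ _ _] _] := old_inv.
case=> [[_ [_ [-> ->]]]|[_ [_ [-> ->]]]]; first exact: split1 hsplit.
by apply: split2 hsplit; move=> x y; apply: h1.
Qed.

Lemma conf_ne' s s' Ws Ws' : Conf s s' Ws Ws' -> Ws' != set0.
Proof. by case=> [[_ [_ [_ ->]]]|[_ [_ [_ ->]]]]; [exact: V2ne|exact: V1ne]. Qed.

Lemma PInv_s s s' Ws Ws' : Conf s s' Ws Ws' -> PInv (nthp ps' s) (T ps' s).
Proof.
move=> C; rewrite (conf_nth C).
have [h _] := old_inv.
apply: (side_PInv h zp (conf_cov C) (conf_dis C) (conf_ne' C) (conf_split C)).
  by move=> u uW x; apply: E2 C uW.
by move=> x; apply: E3 C.
Qed.

Lemma PInv_q q : q < n -> q <> i0 -> PInv (nthp ps' q) (T ps' q).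
Proof.
move=> qn qi; have qn' : q <> n by move=> E; move: qn; rewrite E ltnn.
rewrite nth'_old //; have [h _] := Hinv qn.
exact: (PInv_ext h (fun u uq x => @E1 q u x qn qi uq)).
Qed.

Lemma S1_s s s' Ws Ws' : Conf s s' Ws Ws' -> S1 ps' s.
Proof.
move=> C; have Cs := conf_sym C; have sn := conf_ne C.
have [_ hS1] := old_inv.
have nn : forall c, c < n -> c <> n by move=> c cn E; move: cn; rewrite E ltnn.
have neq : forall c, c < n -> c <> i0 -> c <> s.
  move=> c cn ci; case: (conf_s C) => -> // E; by move: cn; rewrite E ltnn.
move=> m''; rewrite (conf_nth C) side_pv.
case: (eqVneq (inr m'' : U) z) => [E|mz] /=.
  rewrite orbT => _; split.
    exists s'; split; first by rewrite size' (conf_lt Cs).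
      by move=> E'; apply: sn.
    by rewrite (conf_nth Cs) side_pv E eqxx orbT.
  move=> j1 j2; rewrite size' => j1n j2n j1s j2s; rewrite E => m1 m2.
  have oth : forall j, j < n.+1 -> j <> s -> z \in pv (nthp ps' j) -> j = s'.
    move=> j jn js mj; exact: arith4 (z_loc jn mj) (conf_s C) (conf_s Cs) sn js.
  by rewrite (oth _ j1n j1s m1) (oth _ j2n j2s m2).
rewrite orbF => mW.
have mP : (inr m'' : U) \in pv p := subsetP (conf_sub C) _ mW.
have [[j [jn ji mj]] uniq] := hS1 _ mP.
have mW' : (inr m'' : U) \notin Ws' by rewrite (disjointFr (conf_dis C) mW).
split.
  exists j; split; first by rewrite size'; apply: leqW.
    exact: neq.
  by rewrite new_old //; [apply: leqW | apply: nn].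
have oth : forall j1, j1 < n.+1 -> j1 <> s -> inr m'' \in pv (nthp ps' j1) -> j1 < n /\ j1 <> i0 /\ inr m'' \in pv (nthp ps j1).
  move=> j1 j1n j1s m1.
  have j1s' : j1 <> s'.
    move=> E'; move: m1; rewrite E' (conf_nth Cs) side_pv (negbTE mz) orbF; exact/negP.
  have [j1i j1n'] := conf_other C j1s j1s'.
  have j1n2 := lt_n j1n j1n'.
  by rewrite new_old // in m1.
move=> j1 j2; rewrite size' => j1n j2n j1s j2s m1 m2.
have [a1 [b1 c1]] := oth _ j1n j1s m1.
have [a2 [b2 c2]] := oth _ j2n j2s m2.
exact: uniq.
Qed.

Lemma S1_q q : q < n -> q <> i0 -> S1 ps' q.
Proof.
move=> qn qi; have qn' : q <> n by move=> E; move: qn; rewrite E ltnn.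
have [_ hS] := Hinv qn.
move=> m''; rewrite nth'_old // => mq.
have [[j [jn jq mj]] uniq] := hS _ mq.
have mz : (inr m'' : U) != z by apply: contraTneq mq => ->; exact: fresh.
split.
  have [j' [mj' hj]] := lift_mem jn mz mj.
  exists j'; split => //.
    by case: hj => [->|[_ ->]]; rewrite size' // ltnW.
  by case: hj => [->|[_ ->]] // E; apply: qn'.
move=> j1 j2; rewrite size' => j1n j2n j1q j2q m1 m2.
have fne : forall c, c <> q -> f c <> q.
  by move=> c cq; rewrite /f; case: eqP => // _ E; apply: qi; rewrite E.
have E := uniq _ _ (f_lt j1n) (f_lt j2n) (fne _ j1q) (fne _ j2q) (pv_old mz m1) (pv_old mz m2).
move: E m1 m2; rewrite /f.
case: (eqVneq j1 n) => [->|j1n']; case: (eqVneq j2 n) => [->|j2n'] //.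
- move=> E; subst j2; rewrite nth'_i0 nth'_n pv1 pv2 (negbTE mz) !orbF inE => /andP [h _] h'.
  by rewrite h' in h.
- move=> E; subst j1; rewrite nth'_i0 nth'_n pv1 pv2 (negbTE mz) !orbF inE => h' /andP [h _].
  by rewrite h' in h.
Qed.

Lemma INV' : INV ps'.
Proof.
move=> q; rewrite size' => qn.
case: (eqVneq q i0) => [->|qi].
  have C : Conf i0 n V1 V2 by left.
  by split; [exact: PInv_s C | exact: S1_s C].
case: (eqVneq q n) => [->|qn'].
  have C : Conf n i0 V2 V1 by right.
  by split; [exact: PInv_s C | exact: S1_s C].
have qn2 : q < n by apply: lt_n qn _; apply/eqP.
by split; [apply: PInv_q | apply: S1_q] => //; apply/eqP.
Qed.
End Step.

Lemma INV_init : INV [:: ip].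
Proof.
move=> q; rewrite /= ltnS leqn0 => /eqP ->; rewrite /=.
have pvE : forall u, u \in pv ip -> exists y, u = inl y.
  by move=> u /imsetP [y _ ->]; exists y.
split.
  split.
  - by case=> [a|a] [b|b] //=; rewrite esym.
  - by case=> [a|a] //=; rewrite eirr.
  - by move=> u w x /pvE [a ->] /pvE [b ->] ab /= -> E; move: ab; rewrite E eqxx.
  - by move=> u /pvE [a ->]; exists a.
  - by move=> x; exists (inl x) => //; apply/imsetP; exists x.
  - by move=> u w x y /pvE [a ->] /pvE [b ->] _ /= -> ->.
  - by move=> u w x y /pvE [a ->] /pvE [b ->] _ /= pab [-> _] [-> _].
move=> m' /pvE [y] //.
Qed.

Lemma INV_reach ps : sd_reach e ps -> INV ps.
Proof.
elim=> [|ps0 i V1 m0 _ IH iS hs fr]; first exact: INV_init.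
apply: (INV' iS hs _ IH).
by move=> j jn; move/all_nthP: fr; apply.
Qed.
End Decomp.

Lemma connect_cross (V : finType) (e : rel V) (P : V -> Prop) x y :
  connect e x y -> P x -> ~ P y -> exists a b, [/\ P a, ~ P b & e a b].
Proof.
move=> c Px nPy; apply: NNPP => H; apply: nPy.
move: y c; apply: (connect_ind' (P := P)) => // a b Pa eab.
by apply: NNPP => nb; apply: H; exists a, b.
Qed.

Theorem mainTheorem7 (V M : finType) (e : rel V) (k : nat)
  (ps : seq (part (V + M)%type)) (i : 'I_(size ps)) :
  symmetric e -> irreflexive e -> (forall x y, connect e x y) ->
  0 < k -> smw_lt e k ->
  is_split_decomp e ps ->
  3 < #|pv (pt e i)| ->
  forall a b c, heavy e k i a b -> heavy e k i a c -> b = c.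
Proof.
move=> esym eirr econ k0 [N [t [lf [[tsym tirr tcon [ttree tdeg lfinj tleaf]] hsm]]]] [hr hprime] c4.
move=> a b c /and5P [aP bP pab sa sb] /and5P [_ cP pac _ sc].
have [hI _] := INV_reach esym eirr hr (ltn_ord i).
set P := pt e i in aP bP cP pab pac sa sb sc c4.
have PE : P = nth (init_part M e) ps i by [].
rewrite -PE in hI.
case: hI => psym pirr pdis pne pcov pe_e pe_pe.
set W := act e i.
have WA : forall u x, x \in W u <-> A e (T e ps i u) x by move=> u x; exact: act_A.
have Wsub : forall u x, x \in W u -> T e ps i u x by move=> u x /WA [].
have Hne : forall u, u \in pv P -> W u != set0.
  move=> u uP; have [x hx] := pne u uP.
  have [w [wP wu]] : exists w, w \in pv P /\ w != u.
    have : 1 < #|pv P| by apply: leq_trans c4.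
    case/card_gt1P => w1 [w2 [w1P w2P w12]].
    by case: (eqVneq w1 u) => [E|h]; [exists w2; split => //; rewrite -E eq_sym | exists w1].
  have [y hy] := pne w wP.
  have uw : u != w by rewrite eq_sym.
  have nuy : ~ T e ps i u y by move=> h; exact: (pdis u w y uP wP uw h hy).
  have [x1 [y1 [h1 h2 e12]]] := connect_cross (econ x y) hx nuy.
  apply/set0Pn; exists x1; apply/WA; split => //; exists y1; split => //; by rewrite esym.
have HW : forall u w, u \in pv P -> w \in pv P -> u != w -> [disjoint W u & W w].
  move=> u w uP wP uw; apply/pred0P => x /=; apply/negP => /andP [/Wsub h1 /Wsub h2].
  exact: (pdis u w x uP wP uw h1 h2).
have HN3 : forall u w, u \in pv P -> w \in pv P -> u != w ->
    forall x y, x \in W u -> y \in W w -> e x y = pe P u w.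
  move=> u w uP wP uw x y hx hy; apply/idP/idP => h.
    exact: (pe_e u w x y uP wP uw (Wsub _ _ hx) (Wsub _ _ hy) h).
  exact: (pe_pe u w x y uP wP uw h (proj1 (WA _ _) hx) (proj1 (WA _ _) hy)).
have hprime' : forall V1, ~~ is_split (pv P) (pe P) V1 by move=> V1; apply: hprime.
apply/eqP; apply/negPn/negP => bc.
have ab : a != b by apply: contraTneq pab => ->; rewrite pirr.
have ac : a != c by apply: contraTneq pac => ->; rewrite pirr.
have [d [dP [ad [bd cd]]]] : exists d, d \in pv P /\ [/\ a != d, b != d & c != d].
  case: (pickP [pred x | (x \in pv P) && [&& x != a, x != b & x != c]]) => [d /= /andP [dP /and3P [d1 d2 d3]]|H].
    by exists d; split => //; split; rewrite eq_sym.
  have : #|pv P| <= #|[:: a; b; c]|.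
    apply: subset_leq_card; apply/subsetP => x xP; move: (H x) => /=; rewrite xP /= !inE.
    by move/negbT; rewrite !negb_and !negbK.
  by move/leq_trans/(_ (card_size _)); rewrite leqNgt c4.
have bcn : b != c := bc.
have cab : complete e (W a) (W b).
  by move=> x y hx hy; rewrite (HN3 a b aP bP ab x y hx hy).
have cba : complete e (W b) (W a) by move=> x y hx hy; rewrite esym; exact: cab.
have cca : complete e (W c) (W a).
  by move=> x y hx hy; rewrite esym (HN3 a c aP cP ac y x hy hx).
have [p [q [tpq G]]] := comb_main tsym tirr tcon ttree tdeg lfinj tleaf k0 HW Hne aP bP cP dP
   ab ac ad bcn bd cd cab cba cca sa sb sc.
have := good_sm Hne HN3 hprime' c4 G.
by rewrite leqNgt (hsm p q tpq).
Qed.
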